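(* Let $p\ge5$ be a prime, let $a$ be a positive integer with $\gcd(a,p)=1$, and let $r\ge0$, $m\ge1$ be integers. Let $b_{4,r,a,m}(n)$ be the number of partitions of $n$ in which every multiplicity has the form $j(pr+a)+pk$ with $j\in\{0,1,2,3\}$ and $0\le k\le m-1$. Let $t$ be an integer such that $8ta^{-1}+1$ is a quadratic nonresidue modulo $p$, where $a^{-1}$ is the inverse of $a$ modulo $p$. Then $b_{4,r,a,m}(pn+t)\equiv0\pmod2$ for all $n\ge0$.
   Context: Multiplicity of a part means the number of times it appears in the partition. Equivalently, $\sum_{n\ge0}b_{4,r,a,m}(n)q^n=\prod_{n\ge1}\frac{(1-q^{4(pr+a)n})(1-q^{pmn})}{(1-q^{(pr+a)n})(1-q^{pn})}$. *)

(* Defs.v *)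
From mathcomp Require Import all_boot all_order all_algebra.
Set Implicit Arguments. Unset Strict Implicit. Unset Printing Implicit Defensive.

Definition admissible_mult (p r a m c : nat) : bool :=
  [exists j : 'I_4, exists k : 'I_m, c == j * (p * r + a) + p * k].

(* A partition of n is encoded by its multiplicity function:
   f i = multiplicity of the part (i+1), for 1 <= i+1 <= n (each multiplicity
   is at most n), subject to sum_i (i+1) * f i = n.
   b4 p r a m n = number of partitions of n all of whose multiplicities
   (including the zero multiplicity of absent parts) are admissible. *)
Definition b4 (p r a m n : nat) : nat :=
  #|[set f : {ffun 'I_n -> 'I_n.+1} |
      (\sum_(i < n) (i.+1) * f i == n) &&
      [forall i, admissible_mult p r a m (f i)]]|.

Definition b4z (p r a m : nat) (z : int) : nat :=
  match z with Posz n => b4 p r a m n | Negz _ => 0 end.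

(* Main.v *)
Require Import Defs.
From mathcomp Require Import all_boot all_order all_algebra.
From mathcomp Require Import zify ring.
Set Implicit Arguments. Unset Strict Implicit. Unset Printing Implicit Defensive.
Import GRing.Theory.
Local Open Scope ring_scope.

Definition eqt (R : nzRingType) (M : nat) (p q : {poly R}) :=
  forall k, (k <= M)%N -> p`_k = q`_k.

Lemma eqt_refl (R : nzRingType) M (p : {poly R}) : eqt M p p.
Proof. by []. Qed.
Lemma eqt_sym (R : nzRingType) M (p q : {poly R}) : eqt M p q -> eqt M q p.
Proof. by move=> h k hk; rewrite h. Qed.
Lemma eqt_trans (R : nzRingType) M (p q s : {poly R}) :
  eqt M p q -> eqt M q s -> eqt M p s.
Proof. by move=> h1 h2 k hk; rewrite h1 ?h2. Qed.
Lemma eqt_le (R : nzRingType) M M' (p q : {poly R}) :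
  (M' <= M)%N -> eqt M p q -> eqt M' p q.
Proof. by move=> hM h k hk; apply: h; apply: leq_trans hM. Qed.

Lemma eqtM (R : nzRingType) M (p p' q q' : {poly R}) :
  eqt M p p' -> eqt M q q' -> eqt M (p * q) (p' * q').
Proof.
move=> hp hq k hk; rewrite !coefM; apply: eq_bigr => [[j hj]] _ /=.
rewrite hp ?hq //; first by apply: leq_trans (leq_subr _ _) hk.
by apply: leq_trans hk.
Qed.

Lemma eqtD (R : nzRingType) M (p p' q q' : {poly R}) :
  eqt M p p' -> eqt M q q' -> eqt M (p + q) (p' + q').
Proof. by move=> hp hq k hk; rewrite !coefD hp ?hq. Qed.

Lemma eqt_prod (R : comNzRingType) M (I : Type) (r : seq I) (F G : I -> {poly R}) :
  (forall i, eqt M (F i) (G i)) -> eqt M (\prod_(i <- r) F i) (\prod_(i <- r) G i).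
Proof.
move=> h; elim: r => [|x r IH]; first by rewrite !big_nil.
by rewrite !big_cons; apply: eqtM.
Qed.

Lemma eqt_1X (R : nzRingType) M d (c : R) :
  (M < d)%N -> eqt M (1 + c%:P * 'X^d) 1.
Proof.
move=> hd k hk; rewrite coefD coefCM coefXn.
have -> : (k == d) = false by apply/negbTE; rewrite neq_ltn (leq_ltn_trans hk hd).
by rewrite mulr0 addr0.
Qed.

Lemma eqt_Xn (R : nzRingType) M d (p : {poly R}) :
  (M < d)%N -> eqt M ('X^d * p) 0.
Proof.
move=> hd k hk; rewrite coefXnM coef0.
by rewrite (leq_ltn_trans hk hd).
Qed.

Lemma eqt_coef1 (R : nzRingType) M (p : {poly R}) k :
  eqt M p 1 -> (k <= M)%N -> p`_k = (k == 0%N)%:R.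
Proof. by move=> h hk; rewrite h // coef1. Qed.


Fixpoint qb (R : nzRingType) (Q : R) (N k : nat) : R :=
  match N with
  | 0 => (k == 0)%N%:R
  | N'.+1 => match k with
             | 0 => 1
             | k'.+1 => qb Q N' k' + Q ^+ k'.+1 * qb Q N' k'.+1
             end
  end.

Lemma qb_N0 (R : nzRingType) (Q : R) N : qb Q N 0 = 1.
Proof. by case: N. Qed.

Lemma qb_S (R : nzRingType) (Q : R) N k :
  qb Q N.+1 k.+1 = qb Q N k + Q ^+ k.+1 * qb Q N k.+1.
Proof. by []. Qed.

Lemma qb_gt (R : nzRingType) (Q : R) N k : (N < k)%N -> qb Q N k = 0.
Proof.
elim: N k => [|N IH] [|k] //= hk.
by rewrite !IH ?mulr0 ?addr0 // ltnW.
Qed.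

Lemma qb_P2 (R : comNzRingType) (Q : R) N k :
  qb Q N.+1 k.+1 = Q ^+ (N - k) * qb Q N k + qb Q N k.+1.
Proof.
elim: N k => [|N IH] k.
  by case: k => [|k]; rewrite qb_S ?qb_N0 /= !mulr0 !addr0 ?expr0 ?mulr1.
case: k => [|j].
  rewrite [in RHS]qb_S [in LHS]qb_S !qb_N0 subn0 (IH 0%N) qb_N0 subn0 !mulr1 expr1 exprS; ring.
rewrite [in LHS]qb_S [in RHS]qb_S [in RHS](qb_S Q N j.+1) (IH j) (IH j.+1).
have [hj|hj] := leqP j.+1 N.
  have -> : (N.+1 - j.+1 = N - j)%N by lia.
  have -> : (N - j = (N - j.+1).+1)%N by lia.
  rewrite !exprS; ring.
rewrite !(@qb_gt _ Q N j.+2) ?(@qb_gt _ Q N j.+1) //; try lia.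
rewrite !mulr0 !addr0 ?add0r ?mulr0 ?addr0.
by have -> : (N.+1 - j.+1 = N - j)%N by lia.
Qed.

Definition ex (m k : nat) : nat := ('C(k - m, 2) + 'C(m.+1 - k, 2))%N.

Lemma binS2 x : 'C(x.+1, 2) = ('C(x, 2) + x)%N.
Proof. by rewrite binS bin1. Qed.

Lemma exS m k : (ex m k.+1 + m = ex m k + k)%N.
Proof.
rewrite /ex; have [h|h] := leqP m k.
  have -> : (k.+1 - m = (k - m).+1)%N by lia.
  have -> : (m.+1 - k.+1 = 0)%N by lia.
  rewrite (@bin_small (m.+1 - k)); last by lia.
  rewrite binS2; have -> : 'C(0, 2) = 0%N by []. lia.
have -> : (k.+1 - m = 0)%N by lia.
have -> : (k - m = 0)%N by lia.
have -> : (m.+1 - k = (m.+1 - k.+1).+1)%N by lia.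
rewrite binS2 /=; lia.
Qed.

Lemma ex0S m : ex m.+1 0 = (ex m 0 + m.+1)%N.
Proof. by rewrite /ex !sub0n subn0 binS2 addnA. Qed.

Lemma exSS m k : ex m.+1 k.+1 = ex m k.
Proof. by rewrite /ex !subSS. Qed.

Definition PP (R : comNzRingType) (Q : R) (m r : nat) : {poly R} :=
  \prod_(i < m) ('X + (Q ^+ i.+1)%:P) * \prod_(i < r) (1 + (Q ^+ i)%:P * 'X).

Lemma PP_m0 (R : comNzRingType) (Q : R) m k :
  (PP Q m 0)`_k = Q ^+ (ex m k) * qb Q m k.
Proof.
rewrite /PP big_ord0 mulr1.
elim: m k => [|m IH] k.
  rewrite big_ord0 coef1 /=; case: k => [|k] //=; first by rewrite mulr1.
  by rewrite mulr0.
rewrite big_ord_recr /= mulrDr coefD coefMX coefMC.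
case: k => [|j] /=.
  by rewrite add0r IH !qb_N0 !mulr1 ex0S exprD.
rewrite !IH exSS -mulrA mulrDr; congr (_ + _).
have := exS m j => e.
rewrite [qb _ _ _ * _]mulrC !mulrA -!exprD; congr (_ * _); congr (_ ^+ _); lia.
Qed.

Lemma PP_coef (R : comNzRingType) (Q : R) m r k :
  (PP Q m r)`_k = Q ^+ (ex m k) * qb Q (m + r) k.
Proof.
elim: r k => [|r IH] k; first by rewrite PP_m0 addn0.
have -> : PP Q m r.+1 = PP Q m r * (1 + (Q ^+ r)%:P * 'X).
  by rewrite /PP big_ord_recr /= mulrA.
rewrite mulrDr mulr1 mulrA coefD coefMX coefMC addnS.
case: k => [|j] /=; first by rewrite addr0 IH !qb_N0.
rewrite !IH -qb_S qb_P2 mulrDr addrC; congr (_ + _).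
have [hj|hj] := leqP j (m + r).
  have := exS m j => e.
  rewrite mulrAC mulrA -!exprD; congr (_ * _); congr (_ ^+ _); lia.
by rewrite qb_gt // !mulr0 mul0r.
Qed.

Definition qpr (R : comNzRingType) (Q : R) (a K : nat) : R :=
  \prod_(i < K) (1 - Q ^+ (a + i).+1).

Lemma qprS (R : comNzRingType) (Q : R) a K :
  qpr Q a K.+1 = qpr Q a K * (1 - Q ^+ (a + K).+1).
Proof. by rewrite /qpr big_ord_recr. Qed.

Lemma qpr_add (R : comNzRingType) (Q : R) a K J :
  qpr Q a (K + J) = qpr Q a K * qpr Q (a + K) J.
Proof.
elim: J => [|J IH]; first by rewrite addn0 /qpr big_ord0 mulr1.
by rewrite addnS !qprS IH mulrA addnA.
Qed.

Lemma gqp (R : comNzRingType) (Q : R) N k : (k <= N)%N ->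
  qb Q N k * qpr Q 0 k * qpr Q 0 (N - k) = qpr Q 0 N.
Proof.
elim: N k => [|N IH] k hk.
  have -> : k = 0%N by lia.
  by rewrite /qpr !big_ord0 !mulr1.
case: k hk => [|j] hj.
  by rewrite qb_N0 subn0 /qpr big_ord0 !mul1r.
have e1 := IH j hj.
have -> : (N.+1 - j.+1 = N - j)%N by lia.
rewrite qb_S qprS [qpr Q 0 N.+1]qprS !add0n.
have [hj'|hj'] := leqP j.+1 N.
  have e2 := IH j.+1 hj'.
  move: e1; have -> : (N - j = (N - j.+1).+1)%N by lia.
  rewrite qprS add0n => e1.
  rewrite qprS add0n in e2.
  have -> : (qb Q N j + Q ^+ j.+1 * qb Q N j.+1) * (qpr Q 0 j * (1 - Q ^+ j.+1)) *
    (qpr Q 0 (N - j.+1) * (1 - Q ^+ (N - j.+1).+1)) =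
    (1 - Q ^+ j.+1) * (qb Q N j * qpr Q 0 j * (qpr Q 0 (N - j.+1) * (1 - Q ^+ (N - j.+1).+1)))
    + (Q ^+ j.+1 * (1 - Q ^+ (N - j.+1).+1)) *
      (qb Q N j.+1 * (qpr Q 0 j * (1 - Q ^+ j.+1)) * qpr Q 0 (N - j.+1)) by ring.
  rewrite e1 e2.
  have eQ : Q ^+ j.+1 * Q ^+ (N - j.+1).+1 = Q ^+ N.+1.
    by rewrite -exprD; congr (_ ^+ _); lia.
  have -> : (Q ^+ j.+1 * (1 - Q ^+ (N - j.+1).+1)) = Q ^+ j.+1 - Q ^+ N.+1.
    by rewrite mulrBr mulr1 eQ.
  ring.
move: e1; have -> : j = N by lia.
rewrite (@qb_gt _ Q N N.+1) // mulr0 addr0 subnn => e1.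
have -> : qb Q N N * (qpr Q 0 N * (1 - Q ^+ N.+1)) * qpr Q 0 0 =
  (qb Q N N * qpr Q 0 N * qpr Q 0 0) * (1 - Q ^+ N.+1) by ring.
by rewrite e1.
Qed.


Lemma eqt_prod_seq (R : comNzRingType) M (I : eqType) (r : seq I) (F G : I -> {poly R}) :
  (forall i, i \in r -> eqt M (F i) (G i)) ->
  eqt M (\prod_(i <- r) F i) (\prod_(i <- r) G i).
Proof.
elim: r => [|x r IH] h; first by rewrite !big_nil.
rewrite !big_cons; apply: eqtM; first by apply: h; rewrite mem_head.
by apply: IH => i hi; apply: h; rewrite in_cons hi orbT.
Qed.

Lemma eqt_prod1 (R : comNzRingType) M (I : eqType) (r : seq I) (F : I -> {poly R}) :
  (forall i, i \in r -> eqt M (F i) 1) ->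
  eqt M (\prod_(i <- r) F i) 1.
Proof.
elim: r => [|x r IH] h; first by rewrite !big_nil.
rewrite !big_cons -[X in eqt _ _ X]mulr1; apply: eqtM; first by apply: h; rewrite mem_head.
by apply: IH => i hi; apply: h; rewrite in_cons hi orbT.
Qed.

Lemma eqt_1Xn (R : nzRingType) M d : (M < d)%N -> eqt M (1 + 'X^d : {poly R}) 1.
Proof. by move=> hd; have := @eqt_1X R M d 1 hd; rewrite polyC1 mul1r. Qed.

Definition PX (d : nat -> nat) (K : nat) : {poly 'F_2} :=
  \prod_(i < K) (1 + 'X^(d i)).

Lemma PXS d K : PX d K.+1 = PX d K * (1 + 'X^(d K)).
Proof. by rewrite /PX big_ord_recr. Qed.

Lemma PX_trunc d M L K : (L <= K)%N -> (forall i, (L <= i)%N -> (M < d i)%N) ->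
  eqt M (PX d K) (PX d L).
Proof.
move=> hLK hd; rewrite /PX -!(big_mkord xpredT (fun i => 1 + 'X^(d i))).
rewrite (@big_cat_nat _ _ _ L 0 K _ _ (leq0n L) hLK) /= -[X in eqt _ _ X]mulr1.
apply: eqtM; first exact: eqt_refl.
apply: eqt_prod1 => i; rewrite mem_index_iota => /andP[h1 _].
by apply: eqt_1Xn; apply: hd.
Qed.

Lemma two0 : (2%:R : {poly 'F_2}) = 0.
Proof. by rewrite -polyC_natr; congr (_ %:P); apply/eqP. Qed.

Lemma oppF2 (y : {poly 'F_2}) : - y = y.
Proof.
have h : y = - y + y * 2%:R by ring.
by rewrite [in RHS]h two0 mulr0 addr0.
Qed.

Lemma sqr1X (y : {poly 'F_2}) : (1 + y) ^+ 2 = 1 + y ^+ 2.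
Proof.
have h : (1 + y) ^+ 2 = 1 + y ^+ 2 + y * 2%:R by ring.
by rewrite h two0 mulr0 addr0.
Qed.

Definition Ep K := PX (fun i => i.+1) K.
Definition Ep2 K := PX (fun i => 2 * i.+1)%N K.
Definition Ep4 K := PX (fun i => 4 * i.+1)%N K.
Definition Op K := PX (fun i => (2 * i).+1)%N K.
Definition CC L : {poly 'F_2} := \prod_(i < L) \sum_(j < 4) 'X^(i.+1 * j).

Lemma CC_E L : CC L = Ep L * Ep2 L.
Proof.
rewrite /CC /Ep /Ep2 /PX -big_split /=; apply: eq_bigr => i _.
rewrite !big_ord_recr big_ord0 /= add0r muln0 muln1 (mulnC 2%N) !exprM.
set y := 'X^(i.+1) : {poly 'F_2}.
rewrite ?expr0 ?expr1; ring.
Qed.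

Lemma E_split M : Ep (2 * M) = Op M * Ep2 M.
Proof.
elim: M => [|M IH]; first by rewrite /Ep /Op /Ep2 /PX !big_ord0 mulr1.
have -> : (2 * M.+1 = (2 * M).+2)%N by lia.
rewrite /Ep !PXS -/(Ep _) IH /Op /Ep2 !PXS.
have -> : (2 * M).+2 = (2 * M.+1)%N by lia.
ring.
Qed.

Lemma E2sq K : Ep2 K ^+ 2 = Ep4 K.
Proof.
rewrite /Ep2 /Ep4 /PX -prodrXl; apply: eq_bigr => i _.
by rewrite sqr1X -exprM; congr (_ + GRing.exp _ _); lia.
Qed.

Lemma O_split n : Op (2 * n) =
  \prod_(i < n) (1 + 'X^((4 * i).+1)%N) * \prod_(i < n) (1 + 'X^(4 * i + 3)%N).
Proof.
elim: n => [|n IH]; first by rewrite /Op /PX !big_ord0 mulr1.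
have -> : (2 * n.+1 = (2 * n).+2)%N by lia.
rewrite /Op !PXS -/(Op _) IH !big_ord_recr /=.
have -> : (2 * (2 * n)).+1 = (4 * n).+1 by congr (_.+1); lia.
have -> : (2 * (2 * n).+1).+1 = (4 * n + 3)%N by lia.
ring.
Qed.

Lemma qpr_F2 a K : qpr ('X^4 : {poly 'F_2}) a K = PX (fun i => 4 * (a + i).+1)%N K.
Proof.
rewrite /qpr /PX; apply: eq_bigr => i _.
by rewrite oppF2 -exprM.
Qed.


Lemma PP_eval n :
  (PP ('X^4 : {poly 'F_2}) n n).['X^3] = 'X^(3 * n) * Op (2 * n).
Proof.
rewrite /PP hornerM !horner_prod O_split.
have -> : \prod_(i < n) ('X + (('X^4 : {poly 'F_2}) ^+ i.+1)%:P).['X^3] =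
          \prod_(i < n) ('X^3 * (1 + 'X^((4 * i).+1)%N)).
  apply: eq_bigr => i _; rewrite hornerD hornerX hornerC -exprM mulrDr mulr1 -exprD.
  by congr (_ + GRing.exp _ _); lia.
have -> : \prod_(i < n) (1 + (('X^4 : {poly 'F_2}) ^+ i)%:P * 'X).['X^3] =
          \prod_(i < n) (1 + 'X^(4 * i + 3)%N).
  apply: eq_bigr => i _; rewrite hornerD hornerC hornerCM hornerX -exprM -exprD.
  by congr (_ + GRing.exp _ _); lia.
rewrite big_split /= prodr_const card_ord -exprM mulrA.
by [].
Qed.

Lemma qpr_eqt a K M : (M < 4 * a.+1)%N -> eqt M (qpr ('X^4 : {poly 'F_2}) a K) 1.
Proof.
move=> hM; rewrite qpr_F2.
have -> : (1 : {poly 'F_2}) = PX (fun i => 4 * (a + i).+1)%N 0 by rewrite /PX big_ord0.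
apply: PX_trunc => // i _; apply: leq_trans hM _; lia.
Qed.

Lemma qbE4 N k : (k <= N)%N ->
  eqt (4 * minn k (N - k) + 3) (qb ('X^4 : {poly 'F_2}) N k * Ep4 N) 1.
Proof.
move=> hk; set Q : {poly 'F_2} := 'X^4.
have h1 := gqp Q hk.
have h2 : qpr Q 0 N = qpr Q 0 k * qpr Q k (N - k).
  by have := qpr_add Q 0 k (N - k); rewrite add0n subnKC.
have nz : qpr Q 0 k != 0.
  apply/eqP => h0; have := @qpr_eqt 0 k 0 isT 0%N (leqnn 0).
  by rewrite h0 coef0 coef1.
have h3 : qb Q N k * qpr Q 0 (N - k) = qpr Q k (N - k).
  apply: (mulfI nz); rewrite -h2 -h1; ring.
have h4 : Ep4 N = qpr Q 0 (N - k) * qpr Q (N - k) k.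
  have := qpr_add Q 0 (N - k) k; rewrite add0n subnK // => <-.
  rewrite qpr_F2 /Ep4 /PX.
  by apply: eq_bigr => i _; rewrite add0n.
rewrite h4 mulrA h3 -[X in eqt _ _ X]mulr1.
apply: eqtM; apply: qpr_eqt; lia.
Qed.


Lemma bin2sq x : ('C(x, 2) * 2 + x = x * x)%N.
Proof. elim: x => [|x IH] //; rewrite binS2; nia. Qed.

Lemma ex_cases L k :
  ((L <= k)%N /\ (ex L k * 2 + (k - L) = (k - L) * (k - L))%N) \/
  ((k < L)%N /\ (ex L k * 2 + (L.+1 - k) = (L.+1 - k) * (L.+1 - k))%N).
Proof.
rewrite /ex; have [h|h] := leqP L k.
  left; split => //.
  rewrite (@bin_small (L.+1 - k)); last by lia.
  by rewrite addn0 bin2sq.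
right; split => //.
have -> : (k - L = 0)%N by lia.
by rewrite add0n bin2sq.
Qed.

Lemma arith1 L s k : (s <= L)%N -> (k <= 2 * L)%N ->
  (s + 3 * L - (4 * ex L k + 3 * k) <= 4 * minn k (2 * L - k) + 3)%N.
Proof.
move=> hs hk; case: (ex_cases L k) => [[h e]|[h e]].
  have -> : minn k (2 * L - k) = (2 * L - k)%N by lia.
  set x := (k - L)%N in e.
  have hx : k = (x + L)%N by rewrite /x; lia.
  nia.
have -> : minn k (2 * L - k) = k by lia.
set y := (L.+1 - k)%N in e.
have hy : L.+1 = (y + k)%N by rewrite /y; lia.
nia.
Qed.

Lemma arith2 L s k : (s + 3 * L = 4 * ex L k + 3 * k)%N ->
  s%:Z = 2 * (k%:Z - L%:Z) * (k%:Z - L%:Z) + (k%:Z - L%:Z).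
Proof.
move=> hs; case: (ex_cases L k) => [[h e]|[h e]].
  set x := (k - L)%N in e.
  have hx : k = (x + L)%N by rewrite /x; lia.
  have -> : k%:Z - L%:Z = x%:Z by lia.
  have : (s = 2 * x * x + x)%N by nia.
  move=> ->; rewrite !PoszD !PoszM; ring.
set y := (L.+1 - k)%N in e.
have hy : L.+1 = (y + k)%N by rewrite /y; lia.
have -> : k%:Z - L%:Z = 1 - y%:Z by lia.
have : (s + 5 * y = 2 * y * y + 3)%N by nia.
move=> hs2.
have : s%:Z + 5 * y%:Z = 2 * y%:Z * y%:Z + 3.
  by have := congr1 (fun n : nat => n%:Z) hs2; rewrite /= !PoszD !PoszM.
move=> h2; have -> : s%:Z = 2 * y%:Z * y%:Z + 3 - 5 * y%:Z by rewrite -h2; ring.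
ring.
Qed.

Lemma CC_eqt L : eqt L (CC L) (Op (2 * L) * Ep4 (2 * L)).
Proof.
rewrite CC_E -E2sq expr2 mulrA -E_split mulnA.
apply: eqtM.
  apply: eqt_sym; apply: PX_trunc; [lia | move=> i hi; lia].
apply: eqt_sym; apply: PX_trunc; [lia | move=> i hi; lia].
Qed.

Lemma key L s : (s <= L)%N -> (CC L)`_s != 0 ->
  exists c : int, s%:Z = 2 * c * c + c.
Proof.
move=> hs hC.
have h0 : (Op (2 * L) * Ep4 (2 * L))`_s != 0 by rewrite -(CC_eqt hs).
set P := PP ('X^4 : {poly 'F_2}) L L.
have hX : 'X^(3 * L) * (Op (2 * L) * Ep4 (2 * L)) =
   \sum_(k < size P) (P`_k * ('X^3) ^+ k * Ep4 (2 * L)).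
  by rewrite mulrA -PP_eval horner_coef mulr_suml.
have h1 : ('X^(3 * L) * (Op (2 * L) * Ep4 (2 * L)))`_(s + 3 * L) != 0.
  by rewrite coefXnM ltnNge leq_addl /= addnK.
rewrite hX coef_sum in h1.
case: (pickP (fun k : 'I_(size P) => (P`_k * ('X^3) ^+ k * Ep4 (2 * L))`_(s + 3 * L) != 0))
  => [k hk|hn]; last first.
  by move: h1; rewrite big1 ?eqxx // => k _; have := hn k => /= /negbFE/eqP.
rewrite /P PP_coef in hk.
have kle : (k <= 2 * L)%N.
  rewrite leqNgt; apply/negP => hk2; move: hk.
  have hq : qb ('X^4 : {poly 'F_2}) (L + L) k = 0 by apply: qb_gt; lia.
  by rewrite hq mulr0 !mul0r coef0 eqxx.
have e2 : (L + L = 2 * L)%N by lia.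
rewrite e2 in hk.
move: hk.
have -> : ('X^4 : {poly 'F_2}) ^+ ex L k * qb ('X^4) (2 * L) k * 'X^3 ^+ k * Ep4 (2 * L)
   = 'X^(4 * ex L k + 3 * k) * (qb ('X^4) (2 * L) k * Ep4 (2 * L)).
  by rewrite exprD !exprM; ring.
rewrite coefXnM; case: ltnP => // hd.
rewrite (eqt_coef1 (qbE4 kle)); last exact: arith1.
have [he|hne] := eqVneq (s + 3 * L - (4 * ex L k + 3 * k))%N 0%N; last by rewrite ?eqxx.
move=> _; exists (k%:Z - L%:Z); apply: arith2; lia.
Qed.


Definition Fb (p r a m N : nat) (i : 'I_N) (c : 'I_N.+1) : {poly 'F_2} :=
  if admissible_mult p r a m c then 'X^(i.+1 * c) else 0.

Lemma b4_coef p r a m N :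
  (b4 p r a m N)%:R = (\prod_(i < N) \sum_(c < N.+1) Fb p r a m i c)`_N.
Proof.
rewrite bigA_distr_bigA /= coef_sum.
have -> : \sum_(f : {ffun 'I_N -> 'I_N.+1}) (\prod_(i < N) Fb p r a m i (f i))`_N =
  \sum_(f : {ffun 'I_N -> 'I_N.+1})
     ((\sum_(i < N) (i.+1) * f i == N) && [forall i, admissible_mult p r a m (f i)])%:R.
  apply: eq_bigr => f _.
  case: (boolP [forall i, admissible_mult p r a m (f i)]) => [/forallP h|/forallPn [i hi]].
    rewrite (eq_bigr (fun i : 'I_N => 'X^(i.+1 * f i))); last by move=> i _; rewrite /Fb h.
    by rewrite prodrXr coefXn andbT eq_sym.
  rewrite (bigD1 i) //= /Fb (negbTE hi) mul0r coef0 andbF //.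
rewrite -natr_sum /b4; congr (_ %:R).
rewrite -sum1_card big_mkcond /=; apply: eq_bigr => f _.
by rewrite in_set; case: ifP.
Qed.

Lemma phi_inj1 p r a j1 j2 k1 k2 : prime p -> (5 <= p)%N -> coprime a p ->
  (j1 < 4)%N -> (j2 <= j1)%N ->
  (j1 * (p * r + a) + p * k1 = j2 * (p * r + a) + p * k2)%N -> j1 = j2 /\ k1 = k2.
Proof.
move=> pp p5 cop hj1 hj12 e.
have e2 : ((j1 - j2) * (p * r) + (j1 - j2) * a + p * k1 = p * k2)%N.
  have : (j1 = (j1 - j2) + j2)%N by lia.
  move=> hj; rewrite hj in e; move: e; rewrite !mulnDl !mulnDr; lia.
have hd : (p %| (j1 - j2) * a)%N.
  have h1 : (p %| (j1 - j2) * (p * r) + p * k1)%N.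
    by apply: dvdn_add; [apply: dvdn_mull; apply: dvdn_mulr | apply: dvdn_mulr].
  have : (p %| (j1 - j2) * (p * r) + (j1 - j2) * a + p * k1)%N by rewrite e2 dvdn_mulr.
  by rewrite -addnA [((j1 - j2) * a + _)%N]addnC addnA (dvdn_addr _ h1).
have cop' : coprime p a by rewrite coprime_sym.
rewrite mulnC Gauss_dvdr // in hd.
have hz : (j1 - j2 = 0)%N.
  apply/eqP; apply: contraT => hn.
  have := dvdn_leq (m:=(j1 - j2)%N) _ hd; rewrite lt0n hn => /(_ isT); lia.
split; first lia.
have hj : j1 = j2 by lia.
subst j1; move/eqP: e; rewrite eqn_add2l eqn_mul2l => /orP[/eqP h|/eqP //].
by move: pp; rewrite h.
Qed.

Lemma phi_inj p r a j1 j2 k1 k2 : prime p -> (5 <= p)%N -> coprime a p ->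
  (j1 < 4)%N -> (j2 < 4)%N ->
  (j1 * (p * r + a) + p * k1 = j2 * (p * r + a) + p * k2)%N -> j1 = j2 /\ k1 = k2.
Proof.
move=> pp p5 cop h1 h2 e; have [h|h] := leqP j2 j1.
  exact: phi_inj1 e.
have [-> ->] := phi_inj1 pp p5 cop h2 (ltnW h) (esym e); done.
Qed.

Lemma eqt_sum0 (R : nzRingType) M (I : Type) (r : seq I) (P : pred I) (F : I -> {poly R}) :
  (forall i, P i -> eqt M (F i) 0) -> eqt M (\sum_(i <- r | P i) F i) 0.
Proof.
move=> h; apply: (big_ind (fun x => eqt M x 0)) => //.
by move=> x y hx hy k hk; rewrite coefD hx ?hy // coef0 addr0.
Qed.

Lemma compXn (q : {poly 'F_2}) n : 'X^n \Po q = q ^+ n.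
Proof. by rewrite rmorphXn /= comp_polyX. Qed.

Lemma factor_eqt p r a m N (i : 'I_N) : prime p -> (5 <= p)%N -> coprime a p ->
  eqt N (\sum_(c < N.+1) Fb p r a m i c)
   (((\sum_(j < 4) 'X^(i.+1 * j)) \Po 'X^(p * r + a)) * ((\sum_(k < m) 'X^(i.+1 * k)) \Po 'X^p)).
Proof.
move=> pp p5 cop.
set A := (p * r + a)%N; set d := i.+1.
set phi := (fun jk : 'I_4 * 'I_m => (jk.1 * A + p * jk.2)%N).
have -> : ((\sum_(j < 4) 'X^(d * j)) \Po 'X^A) * ((\sum_(k < m) 'X^(d * k)) \Po 'X^p)
    = \sum_(jk : 'I_4 * 'I_m) 'X^(d * phi jk) :> {poly 'F_2}.
  rewrite !rmorph_sum /=.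
  rewrite mulr_suml -(pair_bigA _ (fun (j : 'I_4) (k : 'I_m) => 'X^(d * phi (j, k)))) /=.
  apply: eq_bigr => j _; rewrite mulr_sumr; apply: eq_bigr => k _.
  rewrite !compXn -!exprM -exprD /phi /=; congr (_ ^+ _); lia.
rewrite (bigID (fun jk => phi jk <= N)%N) /= -[X in eqt _ X]addr0.
apply: eqtD; last first.
  apply: eqt_sym; apply: eqt_sum0 => jk hjk k hk.
  rewrite coefXn coef0; case: eqP => // e; exfalso; move: hjk; rewrite -ltnNge; lia.
have -> : \sum_(c < N.+1) Fb p r a m i c = \sum_(c < N.+1 | admissible_mult p r a m c) 'X^(d * c).
  by rewrite [RHS]big_mkcond /=; apply: eq_bigr => c _; rewrite /Fb.
have Ep : \sum_(jk | (phi jk <= N)%N) 'X^(d * phi jk) =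
    \sum_(c < N.+1 | admissible_mult p r a m c) 'X^(d * c) :> {poly 'F_2}.
  rewrite (partition_big (fun jk => inord (phi jk) : 'I_N.+1) (fun c : 'I_N.+1 => admissible_mult p r a m c)).
    apply: eq_bigr => c hc.
    move/existsP: (hc) => [j0 /existsP [k0 /eqP hc0]].
    rewrite (big_pred1 (j0, k0)); first by rewrite /phi /= -hc0.
    move=> [j k] /=; apply/idP/idP.
      move/andP=> [hle /eqP hin].
      have e1 : phi (j, k) = c by rewrite -hin inordK.
      have := phi_inj pp p5 cop (ltn_ord j) (ltn_ord j0) (etrans e1 hc0).
      by move=> [hj hk]; apply/eqP; congr (_, _); apply: val_inj.
    move/eqP=> ->.
    have e1 : phi (j0, k0) = c by rewrite /phi /= -hc0.
    by rewrite e1 -ltnS ltn_ord /= inord_val.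
  move=> [j k] /= hle; rewrite /admissible_mult inordK //.
  by apply/existsP; exists j; apply/existsP; exists k.
by rewrite Ep; apply: eqt_refl.
Qed.


Lemma b4_odd_key p r a m N : prime p -> (5 <= p)%N -> (0 < a)%N -> coprime a p ->
  odd (b4 p r a m N) ->
  exists s u (c : int), (s * (p * r + a) + p * u = N)%N /\ s%:Z = 2 * c * c + c.
Proof.
move=> pp p5 a0 cop hodd.
have h0 : (b4 p r a m N)%:R != 0 :> 'F_2.
  by rewrite -(dvdn_pcharf (pchar_Fp (isT : prime 2))) dvdn2 hodd.
rewrite b4_coef in h0.
have h1 := eqt_prod (index_enum 'I_N) (fun i => factor_eqt r m i pp p5 cop).
rewrite (h1 N (leqnn N)) big_split /= -!rmorph_prod /= in h0.
rewrite coefM in h0.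
case: (pickP (fun j : 'I_N.+1 =>
   (((CC N) \Po 'X^(p * r + a))`_j * ((\prod_(i < N) \sum_(k < m) 'X^(i.+1 * k)) \Po 'X^p)`_(N - j)) != 0))
  => [j hj|hn]; last first.
  by move: h0; rewrite big1 ?eqxx // => j _; have := hn j => /= /negbFE/eqP.
have hA : (0 < p * r + a)%N by lia.
have hp : (0 < p)%N by apply: prime_gt0.
move: hj; rewrite /CC !coef_comp_poly_Xn //.
case: ifP => hdA; last by rewrite mul0r eqxx.
case: ifP => hdp; last by rewrite mulr0 eqxx.
move=> hj; have hC : (CC N)`_(j %/ (p * r + a)) != 0.
  by apply: contraNneq hj => h; rewrite /CC h mul0r.
have hs : (j %/ (p * r + a) <= N)%N.
  by apply: leq_trans (leq_div _ _) _; rewrite -ltnS.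
have [c hc] := key hs hC.
exists (j %/ (p * r + a))%N, ((N - j) %/ p)%N, c; split => //.
rewrite divnK // mulnC divnK //; have := ltn_ord j; lia.
Qed.

Theorem theorem4p3 (p a r m : nat) (t : int) :
  prime p -> (5 <= p)%N -> (0 < a)%N -> coprime a p -> (1 <= m)%N ->
  ~~ [exists x : 'F_p, x ^+ 2 == (8%:R * t%:~R * (a%:R)^-1 + 1 : 'F_p)] ->
  forall n : nat, ~~ odd (b4z p r a m (p%:Z * n%:Z + t)).
Proof.
move=> pp p5 a0 cop m1 hnr n.
case Ep: (p%:Z * n%:Z + t) => [N|N'] //=.
apply/negP => hodd.
have [s [u [c [hsu hc]]]] := b4_odd_key pp p5 a0 cop hodd.
apply: (negP hnr); apply/existsP; exists ((4 * c + 1)%:~R).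
have ht : t = s%:Z * a%:Z + p%:Z * (s%:Z * r%:Z + u%:Z - n%:Z) by lia.
have hp0 : p%:R = 0 :> 'F_p by apply: pchar_Fp_0.
have ha0 : a%:R != 0 :> 'F_p.
  rewrite -(dvdn_pcharf (pchar_Fp pp)) -prime_coprime // coprime_sym //.
have hpz : (p%:Z)%:~R = 0 :> 'F_p by [].
have haz : (a%:Z)%:~R = a%:R :> 'F_p by [].
rewrite ht !intrD !intrM hpz haz mul0r addr0.
have -> : (s%:Z)%:~R = (2 * c * c + c)%:~R :> 'F_p by rewrite hc.
rewrite !intrD !intrM.
apply/eqP; set x : 'F_p := c%:~R; set ai : 'F_p := (a%:R)^-1.
have hai : a%:R * ai = 1 by rewrite /ai divff.
have -> : 8%:R * ((2%:~R * x * x + x) * a%:R) * ai + 1 = 8%:R * (2%:~R * x * x + x) * (a%:R * ai) + 1 by ring.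
rewrite hai; ring.
Qed.
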